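(* Let $m\ge 38$ and let $G$ be a graph with maximum spectral radius among all $H(4,3)$-free graphs with $m$ edges and no isolated vertices. Then $G$ is connected.
   Context: All graphs are simple and undirected; the spectral radius $\rho(G)$ is the largest adjacency eigenvalue. $H(4,3)$ is the graph formed by a cycle of length $4$ and a triangle sharing exactly one common vertex. *)

(* Defs.v *)
From HB Require Import structures.
From mathcomp Require Import all_boot all_order all_algebra.
From mathcomp Require Import classical_sets reals Rstruct.

Set Implicit Arguments. Unset Strict Implicit. Unset Printing Implicit Defensive.
Import Order.TTheory GRing.Theory Num.Theory.

Definition simple_graph (n : nat) (e : rel 'I_n) : Prop :=
  symmetric e /\ irreflexive e.

(* Edge set as unordered pairs {i,j} encoded by i < j. *)
Definition edge_set (n : nat) (e : rel 'I_n) : {set 'I_n * 'I_n} :=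
  [set p : 'I_n * 'I_n | (p.1 < p.2)%N && e p.1 p.2].

Definition num_edges (n : nat) (e : rel 'I_n) : nat := #|edge_set e|.

Definition no_isolated (n : nat) (e : rel 'I_n) : Prop :=
  forall v : 'I_n, exists u : 'I_n, e v u.

Definition connected_graph (n : nat) (e : rel 'I_n) : Prop :=
  forall u v : 'I_n, connect e u v.

(* H(4,3): 4-cycle 0-1-2-3-0 and triangle 0-4-5-0 sharing vertex 0. *)
Definition H43_edge (a b : 'I_6) : bool :=
  let x := nat_of_ord a in let y := nat_of_ord b in
  [|| (x == 0) && (y == 1), (x == 1) && (y == 2), (x == 2) && (y == 3),
      (x == 3) && (y == 0), (x == 0) && (y == 4), (x == 4) && (y == 5)
    | (x == 5) && (y == 0)]%N.

(* G contains H(4,3) as a (not necessarily induced) subgraph. *)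
Definition contains_H43 (n : nat) (e : rel 'I_n) : Prop :=
  exists f : 'I_6 -> 'I_n, injective f /\ forall a b, H43_edge a b -> e (f a) (f b).

Definition H43_free (n : nat) (e : rel 'I_n) : Prop := ~ contains_H43 e.

Definition adj_mx (n : nat) (e : rel 'I_n) : 'M[Rdefinitions.R]_n :=
  \matrix_(i, j) ((e i j)%:R)%R.

Definition spectral_radius (n : nat) (e : rel 'I_n) : Rdefinitions.R :=
  sup [set a : Rdefinitions.R | eigenvalue (adj_mx e) a]%classic.

(* Main.v *)
Require Import Defs.
From HB Require Import structures.
From mathcomp Require Import all_boot all_order all_algebra.
From mathcomp Require Import classical_sets reals Rstruct.
From mathcomp Require Import complex zify ring lra.
Set Implicit Arguments. Unset Strict Implicit. Unset Printing Implicit Defensive.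
Import Order.TTheory GRing.Theory Num.Theory.
Local Open Scope ring_scope.


Section SpecS.
Local Open Scope sesquilinear_scope.
Section Spec.
Variable R : rcfType.

Lemma sym_max_eig n (A : 'M[R]_n.+1) : A^T = A ->
  exists a, eigenvalue A a /\
    forall x : 'rV[R]_n.+1, (x *m A *m x^T) 0 0 <= a * (x *m x^T) 0 0.
Proof.
move=> tA.
pose f := real_complex R.
pose Ac := A ^ f.
have Asym : Ac \is symmetricmx.
  by apply/is_hermitianmxP; rewrite expr0 scale1r map_mx_id // /Ac map_trmx tA.
have Areal : Ac \is a realmx.
  by apply/mxOverP => i j; rewrite mxE complex_real.
have Anorm := symmetric_normalmx Asym Areal.
move/orthomx_spectralP: Anorm.
set P := spectralmx Ac; set sp := spectral_diag Ac => Aeq.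
have Pu : P \is unitarymx := spectral_unitarymx Ac.
have Punit : P \in unitmx := spectral_unit Ac.
have iP : invmx P = P^t* := invmx_unitary Pu.
have spR : sp \is a realmx := hermitian_spectral_diag_real (realsym_hermsym Asym Areal).
pose k := Order.arg_max (ord0 : 'I_n.+1) xpredT (fun i => complex.Re (sp 0 i)).
have kmax : forall i, complex.Re (sp 0 i) <= complex.Re (sp 0 k).
  by rewrite /k; case: arg_maxP => //= j _ H i; apply: H.
have spi i : sp 0 i = f (complex.Re (sp 0 i)) by rewrite /f RRe_real //; apply: (mxOverP spR).
exists (complex.Re (sp 0 k)); split.
  rewrite eigenvalue_root_char -(fmorph_root f) map_char_poly -eigenvalue_root_char.
  apply/eigenvalueP; exists (row k P).
    rewrite -/Ac Aeq !mulmxA -row_mul mulmxV // -!row_mul mul1mx.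
    rewrite row_mul.
    have -> : row k (diag_mx sp) = sp 0 k *: row k 1%:M.
      by apply/rowP => j; rewrite !mxE; case: eqP => [->|]; rewrite ?mulr1 ?mulr0.
    by rewrite -scalemxAl -row_mul mul1mx; congr (_ *: _); apply: spi.
  apply/negP => /eqP h0.
  have : row k P *m invmx P = row k 1%:M by rewrite -row_mul mulmxV.
  rewrite h0 mul0mx => /rowP /(_ k); rewrite !mxE eqxx => /eqP.
  by rewrite eq_sym oner_eq0.
move=> x.
pose z := x ^ f.
have zt : z^t* = x^T ^ f.
  by apply/matrixP => i j; rewrite !mxE conj_Creal // complex_real.
have E1 : (z *m Ac *m z^t*) 0 0 = f ((x *m A *m x^T) 0 0).
  by rewrite zt -!map_mxM mxE.
have E2 : (z *m z^t*) 0 0 = f ((x *m x^T) 0 0).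
  by rewrite zt -!map_mxM mxE.
pose w := z *m P^t*.
have wt : w^t* = P *m z^t*.
  by rewrite /w trmx_mul map_mxM trmxCK.
have F1 : z *m Ac *m z^t* = w *m diag_mx sp *m w^t*.
  by rewrite Aeq iP wt !mulmxA.
have F2 : z *m z^t* = w *m w^t*.
  by rewrite wt /w -iP !mulmxA -[z *m _ *m P]mulmxA mulVmx // mulmx1.
clearbody w.
have : (z *m Ac *m z^t*) 0 0 <= f (complex.Re (sp 0 k)) * (z *m z^t*) 0 0.
  rewrite F1 F2 mul_mx_diag !mxE mulr_sumr; apply: ler_sum => i _.
  rewrite !mxE.
  rewrite mulrAC [X in _ <= X]mulrC.
  apply: ler_wpM2l; first by rewrite mul_conjC_ge0.
  by rewrite (spi i) /f lecR kmax.
by rewrite E1 E2 -rmorphM /f lecR.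
Qed.

End Spec.
End SpecS.

Local Notation RR := Rdefinitions.R.

Definition Qf n (e : rel 'I_n) (x : 'I_n -> RR) :=
  \sum_j \sum_i x i * (e i j)%:R * x j.
Definition Nf n (x : 'I_n -> RR) := \sum_i x i ^+ 2.

Lemma qf_Q n (e : rel 'I_n) x :
  ((\row_i x i) *m adj_mx e *m (\row_i x i)^T) 0 0 = Qf e x.
Proof.
rewrite mxE /Qf; apply: eq_bigr => j _; rewrite !mxE mulr_suml.
by apply: eq_bigr => i _; rewrite !mxE.
Qed.

Lemma nrm_N n x : ((\row_i x i) *m (\row_i x i)^T) 0 0 = Nf (n:=n) x.
Proof. by rewrite mxE /Nf; apply: eq_bigr => j _; rewrite !mxE expr2. Qed.

Lemma N_gt0 n (x : 'I_n -> RR) : (exists i, x i != 0) -> 0 < Nf x.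
Proof.
case=> i xi; rewrite /Nf (bigD1 i) //=.
apply: (@lt_le_trans _ _ (x i ^+ 2)); first by rewrite exprn_even_gt0.
by rewrite lerDl sumr_ge0 // => k _; rewrite sqr_ge0.
Qed.

Lemma adj_sym n (e : rel 'I_n) : symmetric e -> (adj_mx e)^T = adj_mx e.
Proof. by move=> se; apply/matrixP => i j; rewrite !mxE se. Qed.

Lemma eig_Q n (e : rel 'I_n) (v : 'I_n -> RR) b :
  (forall j, \sum_i v i * (e i j)%:R = b * v j) -> Qf e v = b * Nf v.
Proof.
move=> H; rewrite /Qf /Nf mulr_sumr; apply: eq_bigr => j _.
by rewrite -mulr_suml H expr2 mulrA.
Qed.

Lemma rho_spec n (e : rel 'I_n.+1) : symmetric e ->
  (exists v : 'I_n.+1 -> RR, (exists i, v i != 0) /\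
     forall j, \sum_i v i * (e i j)%:R = spectral_radius e * v j)
  /\ forall x, Qf e x <= spectral_radius e * Nf x.
Proof.
move=> se.
have [a [ea Ha]] := sym_max_eig (adj_sym se).
have eigv : forall b, eigenvalue (adj_mx e) b -> exists v : 'I_n.+1 -> RR,
   (exists i, v i != 0) /\ forall j, \sum_i v i * (e i j)%:R = b * v j.
  move=> b /eigenvalueP [v vA v0]; exists (fun i => v 0 i); split.
    apply/existsP; apply: contraNT v0 => /existsPn H.
    by apply/eqP/rowP => i; rewrite mxE; apply/eqP; have := H i; rewrite negbK.
  move=> j; have /rowP /(_ j) := vA; rewrite !mxE => <-.
  by apply: eq_bigr => i _; rewrite mxE.
have Qa : forall x, Qf e x <= a * Nf x.
  move=> x; have := Ha (\row_i x i); by rewrite qf_Q nrm_N.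
have rho : spectral_radius e = a.
  apply/eqP; rewrite eq_le; apply/andP; split.
    apply: ge_sup; first by exists a.
    move=> b /eigv [v [nz Hv]].
    have := Qa v; rewrite (eig_Q Hv) ler_pM2r //; exact: N_gt0.
  apply: ub_le_sup; last by [].
  exists a => b /eigv [v [nz Hv]].
  have := Qa v; rewrite (eig_Q Hv) ler_pM2r //; exact: N_gt0.
by rewrite rho; split; [exact: eigv | exact: Qa].
Qed.

Definition mv n (e : rel 'I_n) (u y z : 'I_n) : rel 'I_n := fun i j =>
  if ((i == y) && (j == z)) || ((i == z) && (j == y)) then false
  else if ((i == u) && (j == y)) || ((i == y) && (j == u)) then true
  else e i j.

Lemma mv_simple n (e : rel 'I_n) u y z :
  simple_graph e -> u != y -> simple_graph (mv e u y z).
Proof.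
move=> [se ie] uy; split.
  move=> i j; rewrite /mv se.
  by case: (i == y); case: (j == z); case: (i == z); case: (j == y); case: (i == u); case: (j == u).
move=> i; rewrite /mv.
case: ifP => // _; rewrite ie.
case: ifP => // /orP [] /andP [/eqP -> /eqP h].
- by rewrite h eqxx in uy.
- by rewrite h eqxx in uy.
Qed.

Lemma mv_sub n (e : rel 'I_n) u y z i j :
  mv e u y z i j -> e i j || (((i == u) && (j == y)) || ((i == y) && (j == u))).
Proof. rewrite /mv; case: ifP => // _; case: ifP => [h _|_ ->]; by rewrite ?h ?orbT. Qed.

Lemma mv_ind n (e : rel 'I_n) u y z i j :
  symmetric e -> e y z -> ~~ e u y -> u != y -> u != z -> y != z ->
  ((mv e u y z i j)%:R : RR) = (e i j)%:R - ((i == y) && (j == z))%:R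
     - ((i == z) && (j == y))%:R + ((i == u) && (j == y))%:R
     + ((i == y) && (j == u))%:R.
Proof.
move=> se eyz euy uy uz yz.
have zy : z != y by rewrite eq_sym.
have yu : y != u by rewrite eq_sym.
have zu : z != u by rewrite eq_sym.
have eyu : ~~ e y u by rewrite se.
have ezy : e z y by rewrite se.
rewrite /mv.
case: (i =P y) => [->|iy]; case: (j =P z) => [->|jz];
  rewrite ?eqxx ?(negbTE yz) ?(negbTE zy) ?(negbTE uy) ?(negbTE yu)
          ?(negbTE uz) ?(negbTE zu) ?andbF ?andbT ?orbF /=.
- by rewrite eyz subr0 !addr0 subrr.
- by case: (j =P u) => [->|_]; rewrite ?(negbTE eyu) /= ?subr0 ?addr0 ?add0r.
- by rewrite !subr0 !addr0.
- case: (i =P z) => [->|_]; case: (j =P y) => [->|_];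
    rewrite ?eqxx ?(negbTE zu) ?andbF ?andbT /=.
  + by rewrite ezy subr0 !addr0 subrr.
  + by rewrite !subr0 !addr0.
  + case: (i =P u) => [->|_] /=.
      by rewrite (negbTE euy) !subr0 add0r addr0.
    by rewrite !subr0 !addr0.
  + by rewrite !subr0 !addr0.
Qed.

Lemma sum_delta n (x : 'I_n -> RR) a b :
  \sum_j \sum_i x i * ((i == a) && (j == b))%:R * x j = x a * x b.
Proof.
rewrite (bigD1 b) //= [X in _ + X]big1 => [|j jb]; last first.
  by apply: big1 => i _; rewrite (negbTE jb) andbF mulr0 mul0r.
rewrite addr0 (bigD1 a) //= [X in _ + X]big1 => [|i ia]; last first.
  by rewrite (negbTE ia) mulr0 mul0r.
by rewrite !eqxx mulr1 addr0.
Qed.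

Lemma Qf_mv n (e : rel 'I_n) u y z x :
  symmetric e -> e y z -> ~~ e u y -> u != y -> u != z -> y != z ->
  Qf (mv e u y z) x = Qf e x - x y * x z - x z * x y + x u * x y + x y * x u.
Proof.
move=> se eyz euy uy uz yz.
rewrite /Qf -!sum_delta -!sumrB -!big_split /=; apply: eq_bigr => j _.
rewrite -!sumrB -!big_split /=; apply: eq_bigr => i _.
rewrite mv_ind //.
by rewrite !mulrDr !mulrN !mulrDl !mulNr.
Qed.

Definition op n (a b : 'I_n) : 'I_n * 'I_n := if (a < b)%N then (a, b) else (b, a).

Lemma op_eq n (a b i j : 'I_n) : (i < j)%N ->
  ((i == a) && (j == b)) || ((i == b) && (j == a)) -> op a b = (i, j).
Proof.
move=> ij /orP [] /andP [/eqP <- /eqP <-]; rewrite /op ?ij //.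
by rewrite ltnNge (ltnW ij).
Qed.

Lemma op_ord n (a b : 'I_n) : a != b -> ((op a b).1 < (op a b).2)%N.
Proof.
rewrite /op => ab; case: ifP => //= /negbT; rewrite -leqNgt leq_eqVlt.
by case/orP => // /eqP /val_inj ba; rewrite ba eqxx in ab.
Qed.

Lemma op_mem n (a b : 'I_n) :
  ((op a b).1 = a /\ (op a b).2 = b) \/ ((op a b).1 = b /\ (op a b).2 = a).
Proof. by rewrite /op; case: ifP => _; [left|right]. Qed.

Lemma mv_edges n (e : rel 'I_n) u y z :
  simple_graph e -> e y z -> ~~ e u y -> u != y -> u != z -> y != z ->
  num_edges (mv e u y z) = num_edges e.
Proof.
move=> [se ie] eyz euy uy uz yz.
have zy : z != y by rewrite eq_sym.
have yu : y != u by rewrite eq_sym.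
have zu : z != u by rewrite eq_sym.
have eyu : ~~ e y u by rewrite se.
have ezy : e z y by rewrite se.
set P1 := op y z; set P2 := op u y.
pose g p := if p == P1 then P2 else if p == P2 then P1 else p.
have P12 : P1 != P2.
  apply/eqP => h.
  have [[h1 h2]|[h1 h2]] := op_mem y z; have [[k1 k2]|[k1 k2]] := op_mem u y;
    rewrite -/P1 -/P2 h in h1 h2; rewrite -/P2 in k1 k2.
  - by move: uy; rewrite -k1 h1 => /eqP.
  - by move: uz; rewrite -k2 h2 => /eqP.
  - by move: uz; rewrite -k1 h1 => /eqP.
  - by move: yz; rewrite -k1 h1 => /eqP.
have gK : involutive g.
  move=> p; rewrite /g; case: (p =P P1) => [->|pP1].
    by rewrite eq_sym (negbTE P12) eqxx.
  case: (p =P P2) => [->|pP2]; first by rewrite eqxx.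
  by rewrite (introF eqP pP1) (introF eqP pP2).
have mvP1 : mv e u y z P1.1 P1.2 = false.
  have [[-> ->]|[-> ->]] := op_mem y z; rewrite /mv !eqxx //.
  by rewrite orbT.
have eP2 : e P2.1 P2.2 = false.
  have [[-> ->]|[-> ->]] := op_mem u y; exact: negbTE.
have mvP2 : mv e u y z P2.1 P2.2.
  have [[-> ->]|[-> ->]] := op_mem u y; rewrite /mv !eqxx
    ?(negbTE uy) ?(negbTE yu) ?(negbTE uz) ?(negbTE zu) ?(negbTE yz) ?(negbTE zy) //=.
have eP1 : e P1.1 P1.2.
  by have [[-> ->]|[-> ->]] := op_mem y z.
rewrite /num_edges.
have -> : edge_set (mv e u y z) = g @^-1: edge_set e.
  apply/setP => p; rewrite !inE /g.
  case: (p =P P1) => [->|pP1]; first by rewrite mvP1 eP2 !andbF.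
  case: (p =P P2) => [->|pP2].
    by rewrite mvP2 eP1 op_ord // op_ord.
  case: p pP1 pP2 => i j /= pP1 pP2.
  case: (ltnP i j) => //= ij.
  rewrite /mv.
  have -> : ((i == y) && (j == z)) || ((i == z) && (j == y)) = false.
    apply/negbTE/negP => h; apply: pP1; rewrite /P1; symmetry; exact: op_eq.
  have -> : ((i == u) && (j == y)) || ((i == y) && (j == u)) = false.
    apply/negbTE/negP => h; apply: pP2; rewrite /P2; symmetry; exact: op_eq.
  by [].
by rewrite card_preimset //; apply: inv_inj.
Qed.

Lemma cyc4 (s0 s1 s2 s3 U1 U2 U3 U4 : bool) :
  (U1 || (s0 == s1)) -> (U2 || (s1 == s2)) -> (U3 || (s2 == s3)) -> (U4 || (s3 == s0)) ->
  (U1 ==> (s0 != s1)) -> (U2 ==> (s1 != s2)) -> (U3 ==> (s2 != s3)) -> (U4 ==> (s3 != s0)) ->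
  ~~ (U1 && U2) -> ~~ (U1 && U3) -> ~~ (U1 && U4) -> ~~ (U2 && U3) -> ~~ (U2 && U4) -> ~~ (U3 && U4) ->
  [&& ~~ U1, ~~ U2, ~~ U3 & ~~ U4].
Proof. by move: s0 s1 s2 s3 U1 U2 U3 U4; do 8! case. Qed.

Lemma cyc3 (s0 s1 s2 U1 U2 U3 : bool) :
  (U1 || (s0 == s1)) -> (U2 || (s1 == s2)) -> (U3 || (s2 == s0)) ->
  (U1 ==> (s0 != s1)) -> (U2 ==> (s1 != s2)) -> (U3 ==> (s2 != s0)) ->
  ~~ (U1 && U2) -> ~~ (U1 && U3) -> ~~ (U2 && U3) ->
  [&& ~~ U1, ~~ U2 & ~~ U3].
Proof. by move: s0 s1 s2 U1 U2 U3; do 6! case. Qed.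

Definition o0 : 'I_6 := @Ordinal 6 0 isT.
Definition o1 : 'I_6 := @Ordinal 6 1 isT.
Definition o2 : 'I_6 := @Ordinal 6 2 isT.
Definition o3 : 'I_6 := @Ordinal 6 3 isT.
Definition o4 : 'I_6 := @Ordinal 6 4 isT.
Definition o5 : 'I_6 := @Ordinal 6 5 isT.

Lemma H43_cases (P : 'I_6 -> 'I_6 -> Prop) :
  P o0 o1 -> P o1 o2 -> P o2 o3 -> P o3 o0 -> P o0 o4 -> P o4 o5 -> P o5 o0 ->
  forall a b, H43_edge a b -> P a b.
Proof.
move=> H1 H2 H3 H4 H5 H6 H7 [a ha] [b hb]; rewrite /H43_edge /=.
have E : forall k (h h' : (k < 6)%N), Ordinal h = Ordinal h' by move=> *; apply: val_inj.
case/orP => [/andP[/eqP ea /eqP eb]|]; first by subst; rewrite (E _ ha isT) (E _ hb isT).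
case/orP => [/andP[/eqP ea /eqP eb]|]; first by subst; rewrite (E _ ha isT) (E _ hb isT).
case/orP => [/andP[/eqP ea /eqP eb]|]; first by subst; rewrite (E _ ha isT) (E _ hb isT).
case/orP => [/andP[/eqP ea /eqP eb]|]; first by subst; rewrite (E _ ha isT) (E _ hb isT).
case/orP => [/andP[/eqP ea /eqP eb]|]; first by subst; rewrite (E _ ha isT) (E _ hb isT).
case/orP => [/andP[/eqP ea /eqP eb]|]; first by subst; rewrite (E _ ha isT) (E _ hb isT).
by case/andP => [/eqP ea /eqP eb]; subst; rewrite (E _ ha isT) (E _ hb isT).
Qed.



Lemma mv_H43 n (e : rel 'I_n) u y z (c : 'I_n -> bool) :
  H43_free e -> (forall i j, e i j -> c i = c j) -> c u -> ~~ c y ->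
  H43_free (mv e u y z).
Proof.
move=> Hfree cE cu cy [f [finj fE]]; apply: Hfree; exists f; split => //.
pose UY (i j : 'I_n) := ((i == u) && (j == y)) || ((i == y) && (j == u)).
pose U a b := UY (f a) (f b).
pose s a := c (f a).
have F1 : forall a b, H43_edge a b -> e (f a) (f b) || U a b.
  by move=> a b /fE /mv_sub.
have F2 : forall a b, U a b ==> (s a != s b).
  move=> a b; apply/implyP; rewrite /U /UY /s.
  by case/orP => /andP [/eqP -> /eqP ->]; rewrite ?cu (negbTE cy).
have F3 : forall a b, H43_edge a b -> U a b || (s a == s b).
  move=> a b /F1 /orP [/cE h|->]; by rewrite /s ?h ?eqxx ?orbT.
have F4 : forall a b c d, U a b -> U c d ->
    ((a == c) && (b == d)) || ((a == d) && (b == c)).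
  move=> a b c' d; rewrite /U /UY.
  case/orP => /andP [/eqP h1 /eqP h2]; case/orP => /andP [/eqP k1 /eqP k2].
  - by rewrite (finj _ _ (etrans h1 (esym k1))) (finj _ _ (etrans h2 (esym k2))) !eqxx.
  - by rewrite (finj _ _ (etrans h1 (esym k2))) (finj _ _ (etrans h2 (esym k1))) !eqxx orbT.
  - by rewrite (finj _ _ (etrans h1 (esym k2))) (finj _ _ (etrans h2 (esym k1))) !eqxx orbT.
  - by rewrite (finj _ _ (etrans h1 (esym k1))) (finj _ _ (etrans h2 (esym k2))) !eqxx.
have F5 : forall a b c d, ~~ (((a == c) && (b == d)) || ((a == d) && (b == c))) ->
    ~~ (U a b && U c d).
  move=> a b c' d h; apply/negP => /andP [h1 h2]; move/negP: h; apply; exact: F4.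
have E1 : H43_edge o0 o1 by []. have E2 : H43_edge o1 o2 by [].
have E3 : H43_edge o2 o3 by []. have E4 : H43_edge o3 o0 by [].
have E5 : H43_edge o0 o4 by []. have E6 : H43_edge o4 o5 by [].
have E7 : H43_edge o5 o0 by [].
have C4 := cyc4 (F3 _ _ E1) (F3 _ _ E2) (F3 _ _ E3) (F3 _ _ E4) (F2 o0 o1) (F2 o1 o2)
  (F2 o2 o3) (F2 o3 o0) (F5 o0 o1 o1 o2 isT) (F5 o0 o1 o2 o3 isT) (F5 o0 o1 o3 o0 isT)
  (F5 o1 o2 o2 o3 isT) (F5 o1 o2 o3 o0 isT) (F5 o2 o3 o3 o0 isT).
have C3 := cyc3 (F3 _ _ E5) (F3 _ _ E6) (F3 _ _ E7) (F2 o0 o4) (F2 o4 o5) (F2 o5 o0)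
  (F5 o0 o4 o4 o5 isT) (F5 o0 o4 o5 o0 isT) (F5 o4 o5 o5 o0 isT).
case/and4P: C4 => N1 N2 N3 N4; case/and3P: C3 => N5 N6 N7.
have G : forall a b, H43_edge a b -> ~~ U a b -> e (f a) (f b).
  by move=> a b /F1 /orP [//|->].
apply: H43_cases; apply: G => //.
Qed.

Lemma mv_noiso n (e : rel 'I_n) u y z : no_isolated e -> u != y -> u != z -> y != z ->
  forall v, v != z -> exists w, mv e u y z v w.
Proof.
move=> ne uy uz yz v vz.
have yu : y != u by rewrite eq_sym.
have zu : z != u by rewrite eq_sym.
case: (v =P u) => [->|vu].
  by exists y; rewrite /mv !eqxx (negbTE uy) (negbTE uz).
case: (v =P y) => [->|vy].
  exists u; rewrite /mv !eqxx (negbTE yz) (negbTE yu) (negbTE uz) /= ?orbT. done.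
have [w ew] := ne v.
by exists w; rewrite /mv (introF eqP vu) (introF eqP vy) (negbTE vz).
Qed.

Lemma mv_z n (e : rel 'I_n) u y z : u != z -> y != z ->
  (exists2 w, w != y & e z w) -> exists w, mv e u y z z w.
Proof.
move=> uz yz [w wy ezw].
have zu : z != u by rewrite eq_sym.
have zy : z != y by rewrite eq_sym.
by exists w; rewrite /mv (negbTE zy) (negbTE wy) (negbTE zu) ?andbF /=.
Qed.

Lemma mv_z_iso n (e : rel 'I_n) u y z : u != z -> y != z ->
  (forall w, e z w -> w = y) -> forall j, ~~ mv e u y z z j.
Proof.
move=> uz yz H j.
have zu : z != u by rewrite eq_sym.
have zy : z != y by rewrite eq_sym.
rewrite /mv (negbTE zy) (negbTE zu) eqxx /=.
case: (j =P y) => // jy; apply/negP => /H; exact: jy.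
Qed.

Definition del n (e : rel 'I_n.+1) (z : 'I_n.+1) : rel 'I_n :=
  fun i j => e (lift z i) (lift z j).

Lemma lift_ltn n (h : 'I_n.+1) (i j : 'I_n) : (lift h i < lift h j)%N = (i < j)%N.
Proof.
rewrite /= /bump; case: (leqP h i) => hi; case: (leqP h j) => hj /=;
  rewrite ?add1n ?add0n ?ltnS //; apply/idP/idP => H; lia.
Qed.

Lemma del_simple n (e : rel 'I_n.+1) z : simple_graph e -> simple_graph (del e z).
Proof. by move=> [se ie]; split => [i j|i]; rewrite /del; [exact: se | exact: ie]. Qed.

Lemma del_noiso n (e : rel 'I_n.+1) z : simple_graph e -> (forall j, ~~ e z j) ->
  (forall v, v != z -> exists w, e v w) -> no_isolated (del e z).
Proof.
move=> [se ie] iz ne v.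
have [w ew] := ne (lift z v) (negbT (lift_eqF _ _)).
have wz : z != w.
  by apply/eqP => wz; move: ew; rewrite -wz se; apply/negP/iz.
have [w' wE _] := unlift_some wz.
by exists w'; rewrite /del -wE.
Qed.

Lemma del_H43 n (e : rel 'I_n.+1) z : H43_free e -> H43_free (del e z).
Proof.
move=> Hf [f [fi fE]]; apply: Hf; exists (lift z \o f); split.
  by move=> a b /= h; apply: fi; apply: (lift_inj h).
by move=> a b /fE.
Qed.

Lemma del_edges n (e : rel 'I_n.+1) z : simple_graph e -> (forall j, ~~ e z j) ->
  num_edges (del e z) = num_edges e.
Proof.
move=> [se ie] iz.
pose h (p : 'I_n * 'I_n) := (lift z p.1, lift z p.2).
have hinj : injective h.
  move=> [a b] [c d] E.
  have h1 : lift z a = lift z c by exact: (congr1 fst E).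
  have h2 : lift z b = lift z d by exact: (congr1 snd E).
  by rewrite (lift_inj h1) (lift_inj h2).
rewrite /num_edges.
suff -> : edge_set e = h @: edge_set (del e z) by rewrite card_imset.
apply/setP => [[i j]]; rewrite [in LHS]inE /=; apply/idP/imsetP; last first.
  by case=> [[a b]]; rewrite inE /= => /andP [ab eab] [-> ->]; rewrite lift_ltn ab.
case/andP => ij eij.
have iz' : z != i by apply/eqP => zi; move: eij; rewrite -zi; apply/negP/iz.
have jz' : z != j.
  by apply/eqP => zj; move: eij; rewrite -zj se; apply/negP/iz.
have [a ia _] := unlift_some iz'; have [b jb _] := unlift_some jz'.
subst i j.
by exists (a, b) => //; rewrite inE /= -(lift_ltn z) ij.
Qed.

Lemma del_Qf n (e : rel 'I_n.+1) z (x : 'I_n.+1 -> RR) : x z = 0 ->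
  Qf (del e z) (fun i => x (lift z i)) = Qf e x.
Proof.
move=> xz; rewrite /Qf (bigD1_ord z) //= [X in X + _]big1 ?add0r; last first.
  by move=> i _; rewrite xz mulr0.
apply: eq_bigr => j _; rewrite (bigD1_ord z) //= xz !mul0r add0r.
by apply: eq_bigr.
Qed.

Lemma del_Nf n z (x : 'I_n.+1 -> RR) : x z = 0 ->
  Nf (fun i => x (lift z i)) = Nf x.
Proof.
by move=> xz; rewrite /Nf (bigD1_ord z) //= xz expr0n add0r.
Qed.

Lemma sum_delta1 n (F : 'I_n -> RR) a : \sum_i (i == a)%:R * F i = F a.
Proof.
rewrite (bigD1 a) //= [X in _ + X]big1 => [|i ia]; last by rewrite (negbTE ia) mul0r.
by rewrite eqxx mul1r addr0.
Qed.

Lemma rho_lower n (e : rel 'I_n) x : symmetric e -> 0 < Nf x ->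
  Qf e x <= spectral_radius e * Nf x.
Proof.
case: n e x => [|n] e x se.
  by rewrite /Nf big_ord0 ltxx.
by move=> _; have [_ H] := rho_spec se; exact: H.
Qed.

Lemma key_ineq (a t v NC : RR) : t * (a ^+ 2 + 1) = 1 -> 0 < t -> v != 0 ->
  a * (NC + (t * v) ^+ 2) < a * NC + 2 * v * (t * v).
Proof.
move=> ht t0 v0.
have v2 : 0 < v ^+ 2 by rewrite exprn_even_gt0.
have h1 : 0 < 2 - a * t.
  have -> : 2 - a * t = t * (2 * a ^+ 2 - a + 2).
    by rewrite -[in LHS]ht; ring.
  apply: mulr_gt0 => //.
  have -> : 2 * a ^+ 2 - a + 2 = 2 * (a - 1/4) ^+ 2 + 15/8.
    by field.
  by apply: ltr_wpDl; [rewrite mulr_ge0 ?sqr_ge0 | rewrite divr_gt0].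
rewrite -subr_gt0.
have -> : a * NC + 2 * v * (t * v) - a * (NC + (t * v) ^+ 2) = t * v ^+ 2 * (2 - a * t).
  by ring.
by apply: mulr_gt0 => //; apply: mulr_gt0.
Qed.

Lemma main_aux (m n : nat) (e : rel 'I_n.+1) :
  simple_graph e -> num_edges e = m -> no_isolated e -> H43_free e ->
  (forall (n' : nat) (e' : rel 'I_n'),
      simple_graph e' -> num_edges e' = m -> no_isolated e' -> H43_free e' ->
      (spectral_radius e' <= spectral_radius e)%R) ->
  connected_graph e.
Proof.
move=> sg hedges noiso hfree hmax p q.
have [se ie] := sg.
case: (boolP (connect e p q)) => // npq; exfalso.
have [[v [[u0 vu0] vE]] _] := rho_spec se.
set a := spectral_radius e in vE hmax.
have csym : connect_sym e := sym_connect_sym se.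
have [w nw] : exists w, ~~ connect e u0 w.
  case: (boolP (connect e u0 p)) => h; last by exists p.
  exists q; apply/negP => h2; move/negP: npq; apply.
  by apply: connect_trans h2; rewrite csym.
have [z ewz] := noiso w.
set y := w in nw ewz.
pose c i := connect e u0 i.
have cE : forall i j, e i j -> c i = c j.
  move=> i j eij; rewrite /c; apply/idP/idP => h.
    exact: connect_trans h (connect1 eij).
  by apply: connect_trans h (connect1 _); rewrite se.
have cu : c u0 by rewrite /c connect0.
have cy : ~~ c y by [].
have cz : ~~ c z by rewrite -(cE _ _ ewz).
have uy : u0 != y by apply/eqP => h; move: cy; rewrite -h cu.
have uz : u0 != z by apply/eqP => h; move: cz; rewrite -h cu.
have yz : y != z by apply/eqP => h; move: ewz; rewrite h ie.
have euy : ~~ e u0 y by apply/negP => h; move: (cE _ _ h); rewrite cu (negbTE cy).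
pose xC i := if c i then v i else 0.
have xCE : forall j, \sum_i xC i * (e i j)%:R = a * xC j.
  move=> j; rewrite /xC; case: (boolP (c j)) => cj.
    rewrite -vE; apply: eq_bigr => i _; case: (boolP (e i j)) => eij.
      by rewrite (cE _ _ eij) cj.
    by rewrite !mulr0.
  rewrite mulr0; apply: big1 => i _; case: (boolP (e i j)) => eij.
    by rewrite (cE _ _ eij) (negbTE cj) mul0r.
  by rewrite mulr0.
have QC : Qf e xC = a * Nf xC := eig_Q xCE.
pose t := (a ^+ 2 + 1)^-1.
have ht : t * (a ^+ 2 + 1) = 1.
  by rewrite mulVf // lt0r_neq0 // ltr_wpDl // sqr_ge0.
have t0 : 0 < t by rewrite invr_gt0 ltr_wpDl // sqr_ge0.
pose s := t * v u0.
have s0 : s != 0 by rewrite mulf_neq0 // lt0r_neq0.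
pose x i := xC i + (i == y)%:R * s.
have xz : x z = 0 by rewrite /x /xC (negbTE cz) eq_sym (negbTE yz) mul0r addr0.
have xu : x u0 = v u0 by rewrite /x /xC cu (negbTE uy) mul0r addr0.
have xy : x y = s by rewrite /x /xC (negbTE cy) eqxx mul1r add0r.
have Qx : Qf e x = Qf e xC.
  rewrite /Qf; apply: eq_bigr => j _; apply: eq_bigr => i _.
  case: (boolP (e i j)) => eij; last by rewrite !mulr0 !mul0r.
  have cij := cE _ _ eij.
  rewrite /x /xC cij; case: (boolP (c j)) => cj.
    have iy : (i == y) = false.
      by apply/negbTE/eqP => h; move: cij; rewrite h (negbTE cy) cj.
    have jy : (j == y) = false.
      by apply/negbTE/eqP => h; move: cj; rewrite h (negbTE cy).
    by rewrite iy jy !mul0r !addr0.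
  case: (i =P y) => [hi|_]; last by rewrite !mul0r !addr0 !mul0r.
  case: (j =P y) => [hj|_]; last by rewrite !mul0r !addr0 !mulr0.
  by move: eij; rewrite hi hj ie.
have Nx : Nf x = Nf xC + s ^+ 2.
  rewrite /Nf -(sum_delta1 (fun _ => s ^+ 2) y) -big_split /=; apply: eq_bigr => i _.
  rewrite /x; case: (i =P y) => [->|_]; last by rewrite !mul0r !addr0.
  by rewrite /xC (negbTE cy) /= !mul1r add0r expr0n add0r.
have Nx0 : 0 < Nf x by apply: N_gt0; exists y; rewrite xy.
pose e2 := mv e u0 y z.
have Q2 : Qf e2 x = a * Nf xC + 2 * v u0 * s.
  rewrite /e2 Qf_mv // Qx QC xz xu xy !mulr0 !mul0r !subr0.
  ring.
have key : a * Nf x < Qf e2 x.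
  by rewrite Q2 Nx; apply: key_ineq.
have sg2 : simple_graph e2 := @mv_simple _ e u0 y z sg uy.
have ed2 : num_edges e2 = m by rewrite /e2 mv_edges.
have H2 : H43_free e2 := @mv_H43 _ e u0 y z c hfree cE cu cy.
have contra : forall rho, rho <= a -> Qf e2 x <= rho * Nf x -> False.
  move=> rho ra hq.
  have : rho * Nf x <= a * Nf x by apply: ler_wpM2r => //; apply: ltW.
  move=> h; have := lt_le_trans key (le_trans hq h); by rewrite ltxx.
case: (pickP (fun w => (w != y) && e z w)) => [w' /andP [wy ezw] | none].
  have ni2 : no_isolated e2.
    move=> u; case: (u =P z) => [->|uz'].
      by apply: mv_z => //; exists w'.
    by apply: mv_noiso => //; apply/eqP.
  apply: (contra (spectral_radius e2)); first exact: hmax.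
  by apply: rho_lower => //; case: sg2.
have zonly : forall w, e z w -> w = y.
  move=> w2 ezw; have := none w2; rewrite /= ezw andbT => /negbFE /eqP //.
have iso : forall j, ~~ e2 z j := @mv_z_iso _ e u0 y z uz yz zonly.
have oth : forall u, u != z -> exists w, e2 u w := @mv_noiso _ e u0 y z noiso uy uz yz.
pose e3 := del e2 z.
have sg3 : simple_graph e3 := del_simple z sg2.
apply: (contra (spectral_radius e3)).
  apply: hmax => //.
  - by rewrite /e3 del_edges.
  - exact: del_noiso.
  - exact: del_H43.
rewrite -(del_Qf e2 xz) -(del_Nf xz); apply: rho_lower; first by case: sg3.
by rewrite del_Nf.
Qed.

Theorem mainTheorem3 (m n : nat) (e : rel 'I_n) :
  (38 <= m)%N ->
  simple_graph e -> num_edges e = m -> no_isolated e -> H43_free e ->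
  (forall (n' : nat) (e' : rel 'I_n'),
      simple_graph e' -> num_edges e' = m -> no_isolated e' -> H43_free e' ->
      (spectral_radius e' <= spectral_radius e)%R) ->
  connected_graph e.
Proof.
case: n e => [|n] e _; first by move=> _ _ _ _ _ [].
exact: main_aux.
Qed.
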